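(* Let $C$ be a countable torsion abelian group and $A$ a countable abelian group with torsion subgroup $tA$. Then $\mathrm{PExt}(C,tA)$ and $\mathrm{PExt}(C,A)$ are Borel-definably isomorphic.
   Context: For countable $C,A$: $\mathsf Z(C,A)$ is the Polish group (closed in $A^{C\times C}$) of normalized symmetric 2-cocycles ($c(x,0)=0$, $c(x,y)=c(y,x)$, $c(y,z)-c(x+y,z)+c(x,y+z)-c(x,y)=0$), $\mathsf B(C,A)$ the subgroup of coboundaries $c(x,y)=\phi(y)-\phi(x+y)+\phi(x)$, $\mathsf B_{\mathrm w}(C,A)$ the subgroup of cocycles whose restriction to $S\times S$ is a coboundary for every finite $S\le C$; $\mathrm{PExt}(C,A)=\mathsf B_{\mathrm w}(C,A)/\mathsf B(C,A)$, a group with a Polish cover (Polish group modulo Polishable subgroup). A homomorphism between groups with a Polish cover $\hat G/N\to\hat H/M$ is Borel-definable if it is induced by a Borel function $\hat G\to\hat H$; a Borel-definable isomorphism is a bijective Borel-definable homomorphism. *)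

(* Defs.v *)
From HB Require Import structures.
From mathcomp Require Import all_boot all_order all_algebra.
From mathcomp Require Import boolp classical_sets.
From mathcomp Require Import measure.
Set Implicit Arguments. Unset Strict Implicit. Unset Printing Implicit Defensive.
Import GRing.Theory.
Local Open Scope ring_scope.
Local Open Scope classical_set_scope.

Definition is_torsion (A : zmodType) (a : A) : Prop :=
  exists n : nat, (0 < n)%N /\ a *+ n = 0.

Definition torsion_group (C : zmodType) : Prop := forall c : C, is_torsion c.

Definition torsion_pred (A : zmodType) : {pred A} := fun a => `[< is_torsion a >].
Arguments torsion_pred : clear implicits.

Lemma torsion_zmod_closed (A : zmodType) : zmod_closed (torsion_pred A).
Proof.
split.
  by apply/asboolP; exists 1%N; split => //; rewrite mulr1n.
move=> a b /asboolP[n [n0 an]] /asboolP[m [m0 bm]]; apply/asboolP.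
exists (n * m)%N; split; first by rewrite muln_gt0 n0 m0.
by rewrite mulrnBl mulrnA an mul0rn mulnC mulrnA bm mul0rn subr0.
Qed.

HB.instance Definition _ (A : zmodType) :=
  GRing.isZmodClosed.Build A (torsion_pred A) (torsion_zmod_closed A).

Definition tors (A : countZmodType) := {a : A | a \in torsion_pred A}.
HB.instance Definition _ (A : countZmodType) := SubType.on (tors A).
HB.instance Definition _ (A : countZmodType) := Countable.on (tors A).
HB.instance Definition _ (A : countZmodType) :=
  [SubChoice_isSubZmodule of tors A by <:].

Section Cocycles.
Variables (C A : zmodType).
Implicit Types (c d : C -> C -> A).

Definition cadd c d : C -> C -> A := fun x y => c x y + d x y.
Definition csub c d : C -> C -> A := fun x y => c x y - d x y.

Definition is_cocycle c : Prop :=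
  [/\ forall x, c x 0 = 0,
      forall x y, c x y = c y x &
      forall x y z, c y z - c (x + y) z + c x (y + z) - c x y = 0].

Definition is_coboundary c : Prop :=
  is_cocycle c /\
  exists phi : C -> A, forall x y, c x y = phi y - phi (x + y) + phi x.

Definition finite_subgroup (S : seq C) : Prop :=
  0 \in S /\ forall x y, x \in S -> y \in S -> x - y \in S.

Definition is_weak_coboundary c : Prop :=
  is_cocycle c /\
  forall S : seq C, finite_subgroup S ->
    exists phi : C -> A, forall x y, x \in S -> y \in S ->
      c x y = phi y - phi (x + y) + phi x.
End Cocycles.

(* The product topology of discrete countable spaces; its Borel sigma-algebra
   is generated by the cylinder sets {c | c x y = a}. *)
Definition cylinders (C X : Type) : set (set (C -> C -> X)) :=
  [set B | exists x y (a : X), B = [set c | c x y = a]].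
Arguments cylinders : clear implicits.

Definition borel_set (C X : Type) (B : set (C -> C -> X)) : Prop :=
  <<s cylinders C X >> B.

Definition borel_map (C X Y : Type) (F : (C -> C -> X) -> (C -> C -> Y)) : Prop :=
  forall B, borel_set B -> borel_set (F @^-1` B).

(* PExt(C,A) = B_w(C,A) / B(C,A).  A Borel-definable isomorphism
   PExt(C,X) -> PExt(C,Y) is given by a Borel lift
   F : B_w(C,X) -> B_w(C,Y) (extended to the ambient Polish space) inducing
   a well-defined bijective group homomorphism on the quotients. *)
Definition PExt_borel_iso (C X Y : zmodType)
    (F : (C -> C -> X) -> (C -> C -> Y)) : Prop :=
  borel_map F /\
  [/\ forall c, is_weak_coboundary c -> is_weak_coboundary (F c),
      forall c d, is_weak_coboundary c -> is_weak_coboundary d ->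
        is_coboundary (csub c d) -> is_coboundary (csub (F c) (F d)),
      forall c d, is_weak_coboundary c -> is_weak_coboundary d ->
        is_coboundary (csub (F (cadd c d)) (cadd (F c) (F d))),
      forall c d, is_weak_coboundary c -> is_weak_coboundary d ->
        is_coboundary (csub (F c) (F d)) -> is_coboundary (csub c d) &
      forall e, is_weak_coboundary e ->
        exists c, is_weak_coboundary c /\ is_coboundary (csub (F c) e)].

Definition PExt_borel_isomorphic (C X Y : zmodType) : Prop :=
  exists F : (C -> C -> X) -> (C -> C -> Y), PExt_borel_iso F.

(* Main.v *)
Require Import Defs.
From HB Require Import structures.
From mathcomp Require Import all_boot all_order all_algebra.
From mathcomp Require Import boolp classical_sets measure.
Set Implicit Arguments. Unset Strict Implicit. Unset Printing Implicit Defensive.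
Import GRing.Theory.
Local Open Scope ring_scope.

Ltac reify e :=
  lazymatch e with
  | ?a + ?b => let l := reify a in constr:(rcons l b)
  | ?a => constr:([:: a])
  end.

Lemma sum_rcons (A : zmodType) (s : seq A) x :
  \sum_(i <- rcons s x) i = \sum_(i <- s) i + x.
Proof. by rewrite -cats1 big_cat big_seq1. Qed.

Lemma sum_nth_perm (A : zmodType) (s : seq A) (p : seq nat) :
  perm_eq p (iota 0 (size s)) -> \sum_(i <- s) i = \sum_(i <- p) nth 0 s i.
Proof.
move=> H; rewrite (perm_big _ H) /=.
rewrite -{1}(mkseq_nth 0 s) /mkseq big_map //.
Qed.

Ltac abel0 p :=
  apply/eqP; rewrite -subr_eq0; apply/eqP;
  rewrite ?opprD ?opprK ?oppr0 ?addr0 ?addrA;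
  lazymatch goal with |- ?E = 0 =>
    let l := reify E in
    transitivity (\sum_(i <- l) i);
    [ rewrite ?sum_rcons big_seq1; reflexivity
    | rewrite (@sum_nth_perm _ l p) //= ?big_cons ?big_nil /=;
      rewrite ?addNKr ?addKr ?addr0 ?subrr // ]
  end.

Ltac shw := apply/eqP; rewrite -subr_eq0; apply/eqP;
  rewrite ?opprD ?opprK ?oppr0 ?addr0 ?addrA;
  lazymatch goal with |- ?E = 0 =>
    let l := reify E in idtac l end.

Lemma lin4 (A : zmodType) (a b c d a' b' c' d' : A) :
  (a - a') - (b - b') + (c - c') - (d - d') = (a - b + c - d) - (a' - b' + c' - d').
Proof. abel0 [:: 0;8;12;1;2;9;3;13;4;10;5;14;6;11;7;15]%N. Qed.

Definition dl (C A : zmodType) (f : C -> A) : C -> C -> A :=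
  fun u v => f v - f (u + v) + f u.

Lemma dlB (C A : zmodType) (f g : C -> A) u v :
  dl (fun w => f w - g w) u v = dl f u v - dl g u v.
Proof. rewrite /dl; abel0 [:: 0;6;1;9;2;7;3;10;4;8;5;11]%N. Qed.

Lemma dl_cocycle (C A : zmodType) (f : C -> A) : f 0 = 0 -> is_cocycle (dl f).
Proof. move=> f0; split => [x|x y|x y z]; rewrite /dl.
- by rewrite addr0 f0 add0r addNr.
- rewrite (addrC y x); abel0 [:: 0;5;1;4;2;3]%N.
rewrite !addrA; abel0 [:: 0;3;1;6;2;9;4;7;5;10;8;11]%N.
Qed.

Lemma cocycle_csub (C A : zmodType) (c d : C -> C -> A) :
  is_cocycle c -> is_cocycle d -> is_cocycle (csub c d).
Proof.
move=> [c0 cs cc] [d0 ds dc]; split => [x|x y|x y z]; rewrite /csub.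
- by rewrite c0 d0 subrr.
- by rewrite cs ds.
- by rewrite lin4 cc dc subrr.
Qed.

Lemma cocycle_ext (C A : zmodType) (c d : C -> C -> A) :
  is_cocycle c -> (forall x y, c x y = d x y) -> is_cocycle d.
Proof.
move=> H E; have -> : d = c by apply/funext => x; apply/funext => y; rewrite E.
exact: H.
Qed.

Lemma cocycle0 (C A : zmodType) : is_cocycle (fun _ _ : C => (0 : A)).
Proof. by split => // *; rewrite !(subr0, addr0, add0r). Qed.

Lemma tors_mul (A : zmodType) (a : A) n : (0 < n)%N ->
  a *+ n \in torsion_pred A -> a \in torsion_pred A.
Proof.
move=> n0 /asboolP [m [m0 hm]]; apply/asboolP; exists (n * m)%N; split.
  by rewrite muln_gt0 n0 m0.
by rewrite mulrnA.
Qed.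

Lemma key (C A : zmodType) (P : C -> Prop) (chi : C -> A) (x : C) (n : nat) :
  (0 < n)%N -> x *+ n = 0 -> (forall k, P (x *+ k)) ->
  (forall u v, P u -> P v -> dl chi u v \in torsion_pred A) ->
  chi x \in torsion_pred A.
Proof.
move=> n0 xn Px H.
have P0 : P 0 by have := Px 0%N; rewrite mulr0n.
have h0 : chi 0 \in torsion_pred A.
  by have := H 0 0 P0 P0; rewrite /dl addr0 subrr add0r.
have hk : forall k, chi (x *+ k) - chi x *+ k \in torsion_pred A.
  elim=> [|k IH]; first by rewrite !mulr0n subr0.
  have P1 : P x by have := Px 1%N; rewrite mulr1n.
  have t := H (x *+ k) x (Px k) P1.
  have -> : chi (x *+ k.+1) - chi x *+ k.+1 =
            (chi (x *+ k) - chi x *+ k) - dl chi (x *+ k) x.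
    by rewrite !mulrSr /dl; abel0 [:: 0;6;1;4;2;5;3;7]%N.
  by rewrite rpredB.
have := hk n; rewrite xn => h.
apply: (tors_mul n0).
have -> : chi x *+ n = chi 0 - (chi 0 - chi x *+ n) by rewrite opprB addrC subrK.
by rewrite rpredB.
Qed.

Lemma fs_opp (C : zmodType) (S : seq C) u :
  finite_subgroup S -> u \in S -> - u \in S.
Proof. by move=> [S0 SB] uS; have := SB _ _ S0 uS; rewrite sub0r. Qed.

Lemma fs_add (C : zmodType) (S : seq C) u v :
  finite_subgroup S -> u \in S -> v \in S -> u + v \in S.
Proof.
move=> fS uS vS; have := fS.2 _ _ uS (fs_opp fS vS); by rewrite opprK.
Qed.

Lemma fs_mulrn (C : zmodType) (S : seq C) u k :
  finite_subgroup S -> u \in S -> u *+ k \in S.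
Proof.
move=> fS uS; elim: k => [|k IH]; first by rewrite mulr0n; exact: fS.1.
by rewrite mulrSr fs_add.
Qed.

Definition gen2 (C : zmodType) (x y : C) (n m : nat) : seq C :=
  [seq x *+ i + y *+ j | i <- iota 0 n, j <- iota 0 m].

Lemma mulrn_mod (C : zmodType) (x : C) n i : x *+ n = 0 -> x *+ i = x *+ (i %% n).
Proof.
move=> xn; rewrite {1}(divn_eq i n) mulrnDr mulnC mulrnA xn mul0rn add0r //.
Qed.

Lemma mulrn_neg (C : zmodType) (x : C) n i : (0 < n)%N -> x *+ n = 0 ->
  - (x *+ i) = x *+ (i * n.-1).
Proof.
move=> n0 xn; apply/eqP; rewrite eq_sym -subr_eq0 opprK -mulrnDr.
by rewrite -mulnSr prednK // mulnC mulrnA xn mul0rn.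
Qed.

Section Gen2.
Variables (C : zmodType) (x y : C) (n m : nat).
Hypotheses (n0 : (0 < n)%N) (m0 : (0 < m)%N) (xn : x *+ n = 0) (ym : y *+ m = 0).

Lemma gen2P z : (z \in gen2 x y n m) <-> exists i j, z = x *+ i + y *+ j.
Proof.
split.
  by move=> /allpairsP [[i j] [_ _ ->]]; exists i, j.
move=> [i [j ->]]; rewrite (mulrn_mod i xn) (mulrn_mod j ym).
by apply: allpairs_f; rewrite mem_iota add0n ltn_pmod.
Qed.

Lemma gen2_fs : finite_subgroup (gen2 x y n m).
Proof.
split.
  by apply/gen2P; exists 0%N, 0%N; rewrite !mulr0n addr0.
move=> a b /gen2P [i [j ->]] /gen2P [i' [j' ->]]; apply/gen2P.
exists (i + i' * n.-1)%N, (j + j' * m.-1)%N.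
by rewrite !mulrnDr -(mulrn_neg _ n0 xn) -(mulrn_neg _ m0 ym) opprD addrACA.
Qed.
End Gen2.

Section Tors.
Variables (C : zmodType) (A : countZmodType).

Lemma valB (a b : tors A) : val (a - b) = val a - val b.
Proof. exact: raddfB. Qed.
Lemma valD (a b : tors A) : val (a + b) = val a + val b.
Proof. exact: raddfD. Qed.
Lemma val0 : val (0 : tors A) = 0.
Proof. exact: raddf0. Qed.

Lemma Fcocycle (c : C -> C -> tors A) :
  is_cocycle c <-> is_cocycle (fun x y => val (c x y)).
Proof.
split.
  move=> [c0 cs cc]; split => [x|x y|x y z].
  - by rewrite c0 val0.
  - by rewrite cs.
  - by rewrite -!valB -valD -valB cc val0.
move=> [c0 cs cc]; split => [x|x y|x y z]; apply: val_inj.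
- by rewrite c0 val0.
- by rewrite cs.
- by rewrite !valB valD valB cc val0.
Qed.
End Tors.

Lemma surj_phi (C A : zmodType) (HC : torsion_group C) (e : C -> C -> A) :
  is_weak_coboundary e ->
  exists phi : C -> A, phi 0 = 0 /\ forall x y, e x y - dl phi x y \in torsion_pred A.
Proof.
move=> [[e0 es ec] ew].
have ord : forall x : C, exists n, (0 < n)%N /\ x *+ n = 0 := HC.
have Hpsi : forall x, exists psi : C -> A,
    forall k l, e (x *+ k) (x *+ l) = dl psi (x *+ k) (x *+ l).
  move=> x; have [n [n0 xn]] := ord x.
  have one0 : (0 < 1)%N by [].
  have z1 : (0 : C) *+ 1 = 0 by rewrite mul0rn.
  have [psi Hp] := ew _ (gen2_fs n0 one0 xn z1).
  exists psi => k l; apply: Hp; apply/(gen2P n0 one0 xn z1).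
    by exists k, 0%N; rewrite mulr0n addr0.
  by exists l, 0%N; rewrite mulr0n addr0.
have [Psi HPsi] := choice Hpsi.
exists (fun x => Psi x x); split.
  have := HPsi 0 0%N 0%N; rewrite mulr0n e0 /dl addr0 subrr add0r.
  by move=> <-.
move=> x y.
have [n [n0 xn]] := ord x; have [m [m0 ym]] := ord y.
have [psi Hp] := ew _ (gen2_fs n0 m0 xn ym).
have inS z : (exists i j, z = x *+ i + y *+ j) -> z \in gen2 x y n m.
  by move=> H; apply/(gen2P n0 m0 xn ym).
have close w : (forall k, w *+ k \in gen2 x y n m) ->
    Psi w w - psi w \in torsion_pred A.
  move=> wS; have [nw [nw0 wn]] := ord w.
  apply: (key (P := fun u => exists k, u = w *+ k)
              (chi := fun u => Psi w u - psi u) nw0 wn).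
    by move=> k; exists k.
  move=> u v [k ->] [l ->].
  by rewrite dlB -(HPsi w k l) /dl -Hp ?wS // subrr rpred0.
have xS : x \in gen2 x y n m by apply: inS; exists 1%N, 0%N; rewrite mulr1n mulr0n addr0.
have yS : y \in gen2 x y n m by apply: inS; exists 0%N, 1%N; rewrite mulr1n mulr0n add0r.
rewrite Hp // -opprB -dlB rpredN /dl.
apply: rpredD; first apply: rpredB.
- by apply: close => k; apply: inS; exists 0%N, k; rewrite mulr0n add0r.
- by apply: close => k; apply: inS; exists k, k; rewrite mulrnDl.
- by apply: close => k; apply: inS; exists k, 0%N; rewrite mulr0n addr0.
Qed.
Section BorelS.
Local Open Scope classical_set_scope.
Lemma borel_val (C : Type) (A : countZmodType) :
  borel_map (fun (c : C -> C -> tors A) x y => val (c x y)).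
Proof.
move=> B HB.
set F := (fun (c : C -> C -> tors A) x y => val (c x y)).
pose G := [set B : set (C -> C -> A) | borel_set (F @^-1` B)].
suff : <<s cylinders C A >> `<=` G by move=> /(_ B HB).
have [S0 SC SU] := smallest_sigma_algebra setT (cylinders C (tors A)).
apply: smallest_sub.
  split.
  - rewrite /G /= preimage_set0; exact: S0.
  - move=> X GX; rewrite /G /= setTD -preimage_setC -setTD.
    exact: SC.
  - move=> X GX; rewrite /G /= preimage_bigcup.
    exact: SU.
move=> X [x [y [a ->]]]; rewrite /G /=.
have [aT|aT] := boolP (a \in torsion_pred A).
  have -> : F @^-1` [set c | c x y = a] = [set c | c x y = insubd 0 a].
    apply/seteqP; split => c /=; rewrite /F.
      by move=> <-; rewrite valKd.
    by move=> ->; rewrite insubdK.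
  by apply: sub_gen_smallest; exists x, y, (insubd 0 a).
have -> : F @^-1` [set c | c x y = a] = set0.
  apply/seteqP; split => c //= H; rewrite /F in H.
  by move: aT; rewrite -H (valP (c x y)).
exact: S0.
Qed.
End BorelS.


Lemma order_of (C : zmodType) (HC : torsion_group C) (x : C) :
  exists n, (0 < n)%N /\ x *+ n = 0.
Proof. exact: HC. Qed.

Theorem lemma4p4 (C A : countZmodType) (HC : torsion_group C) :
  PExt_borel_isomorphic C (tors A) A.
Proof.
exists (fun (c : C -> C -> tors A) x y => val (c x y)).
split; first exact: borel_val.
split.
-
  move=> c [cc cw]; split; first by apply/Fcocycle.
  move=> S fS; have [psi Hp] := cw S fS.
  exists (fun u => val (psi u)) => x y xS yS.
  by rewrite Hp // valD valB.
- move=> c d _ _ [gc [phi Hphi]].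
  split.
    apply: (cocycle_ext (proj1 (Fcocycle _) gc)) => x y.
    by rewrite /csub valB.
  exists (fun u => val (phi u)) => x y.
  by rewrite /csub -valB -valB -valD -Hphi.
- move=> c d _ _; split.
    apply: (cocycle_ext (@cocycle0 C A)) => x y.
    by rewrite /csub /cadd valD subrr.
  exists (fun _ => 0) => x y.
  by rewrite /csub /cadd valD subrr subrr addr0.
- move=> c d [cc _] [dc _] [gc [phi Hphi]].
  have gcoc : is_cocycle (csub c d).
    apply/Fcocycle; apply: (cocycle_ext gc) => x y.
    by rewrite /csub valB.
  have phiT : forall x, phi x \in torsion_pred A.
    move=> x; have [n [n0 xn]] := order_of HC x.
    apply: (key (P := fun _ => True) n0 xn) => // u v _ _.
    by rewrite /dl -Hphi /csub -valB (valP (c u v - d u v)).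
  split => //.
  exists (fun u => insubd 0 (phi u)) => x y.
  apply: val_inj; rewrite /csub valB valD valB !insubdK //; exact: Hphi.
- move=> e ew.
  have [phi [phi0 Hphi]] := surj_phi HC ew.
  have [ec ewk] := ew.
  pose c x y : tors A := insubd 0 (e x y - dl phi x y).
  have Hval : forall x y, val (c x y) = e x y - dl phi x y.
    by move=> x y; rewrite /c insubdK.
  have Fcc : is_cocycle (fun x y => val (c x y)).
    apply: (cocycle_ext (cocycle_csub ec (dl_cocycle phi0))) => x y.
    by rewrite Hval.
  exists c; split.
    split; first by apply/Fcocycle.
    move=> S fS; have [psi Hp] := ewk S fS.
    have chiT : forall u, u \in S -> psi u - phi u \in torsion_pred A.
      move=> u uS; have [n [n0 un]] := order_of HC u.
      apply: (key (P := fun w => w \in S) (chi := fun w => psi w - phi w) n0 un).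
        by move=> k; apply: fs_mulrn.
      move=> a b aS bS; rewrite dlB /dl -Hp // -/(dl phi a b) -Hval.
    exists (fun u => insubd 0 (psi u - phi u)) => x y xS yS.
    apply: val_inj; rewrite valD valB !insubdK ?chiT ?fs_add //.
    by rewrite Hp // /dl; abel0 [:: 0;6;1;8;2;10;3;7;4;9;5;11]%N.
  split.
    exact: cocycle_csub Fcc ec.
  exists (fun u => - phi u) => x y.
  by rewrite /csub Hval /dl; abel0 [:: 0;4;1;5;2;6;3;7]%N.
Qed.
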